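(* Let $G=(V,\Sigma,R,S)$ be a context-free grammar in Greibach Normal Form. For all $t,u\in\Sigma^*$: if $D_G(t)=D_G(u)$, then $t\equiv_{L(G)}u$.
   Context: A context-free grammar $G=(V,\Sigma,R,S)$ in Greibach Normal Form has every production of the form $S\to\epsilon$ or $A\to a\,\beta$ with $a\in\Sigma$, $\beta\in(V\setminus\{S\})^*$; $L(G)$ is its language. Let $\delta_G(a,A)=\{\beta\in V^*:(A\to a\,\beta)\in R\}$. Define $\pi:\Sigma^*\times V^*\to\mathcal{P}(V^* )$ recursively by $\pi(t,\alpha)=\{\alpha\}$ if $t=\epsilon$; $\pi(t,\alpha)=\emptyset$ if $t\neq\epsilon$ and $\alpha=\epsilon$; and otherwise $\pi(t,\alpha)=\bigcup_{\beta\in\delta_G(t_0,\alpha_0)}\pi(t_{1:},\beta\alpha_{1:})$, where $t_0$ is the first character of $t$, $t_{1:}$ the rest of $t$, $\alpha_0$ the first symbol of $\alpha$ and $\alpha_{1:}$ the rest of $\alpha$. The pre-displacement of $t\in\Sigma^*$ is $D_G(t)=\{(\alpha,\beta):\alpha\in V^*,\ \beta\in\pi(t,\alpha)\}$. Syntactic congruence: $t\equiv_{L(G)}u$ iff for all $w,z\in\Sigma^*$, $wtz\in L(G)\leftrightarrow wuz\in L(G)$. *)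

(* Defs.v *)
From mathcomp Require Import all_boot.
From Stdlib Require Import Relations.
Set Implicit Arguments. Unset Strict Implicit. Unset Printing Implicit Defensive.

(* A rule A -> gamma with gamma a string over
   V + Sigma (nonterminals are [inl], terminals are [inr]). *)
Record cfg (V Sigma : finType) := CFG {
  start : V;
  rules : seq (V * seq (V + Sigma))
}.

Section Grammar.
Variables (V Sigma : finType) (G : cfg V Sigma).

Inductive step : seq (V + Sigma) -> seq (V + Sigma) -> Prop :=
| Step (x y : seq (V + Sigma)) (A : V) (g : seq (V + Sigma)) :
    (A, g) \in rules G -> step (x ++ inl A :: y) (x ++ g ++ y).

Definition derives := clos_refl_trans _ step.

Definition lang (w : seq Sigma) : Prop :=
  derives [:: inl (start G)] (map inr w).

Definition GNF : Prop :=
  forall r, r \in rules G ->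
    (r = (start G, [::])) \/
    exists (a : Sigma) (beta : seq V),
      r.2 = inr a :: map inl beta /\ start G \notin beta.

Definition delta (a : Sigma) (A : V) (beta : seq V) : Prop :=
  (A, inr a :: map inl beta) \in rules G.

Fixpoint pi (t : seq Sigma) (alpha : seq V) : seq V -> Prop :=
  match t with
  | [::] => fun g => g = alpha
  | a :: t' =>
      match alpha with
      | [::] => fun _ => False
      | A :: alpha' => fun g => exists beta, delta a A beta /\ pi t' (beta ++ alpha') g
      end
  end.

Definition predisp (t : seq Sigma) : seq V * seq V -> Prop :=
  fun p => pi t p.1 p.2.

End Grammar.

Definition synt_cong (Sigma : Type) (L : seq Sigma -> Prop) (t u : seq Sigma) : Prop :=
  forall w z : seq Sigma, L (w ++ t ++ z) <-> L (w ++ u ++ z).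

(* Main.v *)
Require Import Defs.
From mathcomp Require Import all_boot.
From Stdlib Require Import Relations.
Set Implicit Arguments. Unset Strict Implicit. Unset Printing Implicit Defensive.

Section Aux.
Variables (V Sigma : finType) (G : cfg V Sigma).

Inductive gen : seq (V + Sigma) -> seq Sigma -> Prop :=
| Gnil : gen [::] [::]
| Gt a s w : gen s w -> gen (inr a :: s) (a :: w)
| Gn A g s w1 w2 : (A, g) \in rules G -> gen g w1 -> gen s w2 ->
    gen (inl A :: s) (w1 ++ w2).

Lemma gen_cat x y w1 w2 : gen x w1 -> gen y w2 -> gen (x ++ y) (w1 ++ w2).
Proof.
elim=> [|a s w _ IH|A g s v1 v2 Hr Hg _ _ IH] Hy //=.
- by constructor; apply: IH.
- rewrite -catA; apply: Gn Hr Hg _; exact: IH.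
Qed.

Lemma gen_split x y w : gen (x ++ y) w ->
  exists w1 w2, [/\ w = w1 ++ w2, gen x w1 & gen y w2].
Proof.
elim: x w => [|c x IH] w /=.
  by move=> H; exists [::], w; split=> //; constructor.
move=> H; inversion H; subst.
- have [w1 [w2 [-> K1 K2]]] := IH _ H3.
  by exists (a :: w1), w2; split=> //; constructor.
- have [v1 [v2 [-> K1 K2]]] := IH _ H5.
  exists (w1 ++ v1), v2; split; first by rewrite catA.
  + exact: Gn H2 H3 K1.
  + done.
Qed.

Lemma derives_ctx p q x x' : derives G x x' -> derives G (p ++ x ++ q) (p ++ x' ++ q).
Proof.
elim=> [a b [y z A g Hr]| a | a b c _ IH1 _ IH2].
- apply: rt_step. have := Step (p ++ y) (z ++ q) Hr.
  by rewrite -!catA /= ?catA -?catA.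
- exact: rt_refl.
- exact: rt_trans IH1 IH2.
Qed.

Lemma gen_derives s w : gen s w -> derives G s (map inr w).
Proof.
elim=> [|a s' w' _ IH|A g s' w1 w2 Hr _ IH1 _ IH2].
- exact: rt_refl.
- have := derives_ctx [:: inr a] [::] IH. by rewrite /= !cats0.
- apply: rt_trans (_ : derives G _ (g ++ s')) _.
    apply: rt_step. have := Step [::] s' Hr. by [].
  apply: rt_trans (_ : derives G _ (map inr w1 ++ s')) _.
    have := derives_ctx [::] s' IH1. by [].
  rewrite map_cat. have := derives_ctx (map inr w1) [::] IH2. by rewrite !cats0.
Qed.

Lemma step_gen x y w : step G x y -> gen y w -> gen x w.
Proof.
case=> p q A g Hr H.
have [w1 [r [-> H1 H2]]] := gen_split H.
have [w2 [w3 [-> H3 H4]]] := gen_split H2.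
apply: gen_cat H1 _. exact: Gn Hr H3 H4.
Qed.

Lemma gen_map w : gen (map inr w) w.
Proof. elim: w => [|a w IH]; by constructor. Qed.

Lemma derives_gen s w : derives G s (map inr w) -> gen s w.
Proof.
move=> H; apply clos_rt_rt1n in H.
move: H; move Ht: (map inr w) => t H.
elim: H Ht => [x <-|x y z Hs _ IH Ht]; first exact: gen_map.
exact: step_gen Hs (IH Ht).
Qed.

Lemma pi_cat x y a g : Defs.pi G (x ++ y) a g <-> exists b, Defs.pi G x a b /\ Defs.pi G y b g.
Proof.
elim: x a => [|c x IH] a /=.
  by split=> [H|[b [-> H]]] //; exists a.
case: a => [|A a] /=; first by split=> [[]|[b [[] _]]].
split.
- move=> [be [Hd /IH [b [H1 H2]]]]. by exists b; split=> //; exists be.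
- move=> [b [[be [Hd H1]] H2]]. exists be; split=> //; apply/IH; by exists b.
Qed.

Lemma pi_gen w a : Defs.pi G w a [::] -> gen (map inl a) w.
Proof.
elim: w a => [|c w IH] [|A a] //=.
- by move=> _; constructor.
- move=> [be [Hd H]].
  have := IH _ H; rewrite map_cat => /gen_split [w1 [w2 [-> H1 H2]]].
  rewrite -cat_cons. apply: Gn Hd _ H2. by constructor.
Qed.

Hypothesis HG : GNF G.

Lemma gen_pi n w a : size w < n -> start G \notin a -> gen (map inl a) w -> Defs.pi G w a [::].
Proof.
elim: n w a => // n IH w [|A a] Hs HS /=.
  by move=> H; inversion H.
move=> H; inversion H; subst.
rewrite in_cons negb_or in HS; case/andP: HS => HA HS.
case: (HG H2) => /= [[E _]|[c [be [E Hbe]]]].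
  by rewrite E eqxx in HA.
simpl in E; subst g.
inversion H3; subst.
rewrite /=. exists be; split; first exact: H2.
apply: IH.
- by move: Hs; rewrite /= !size_cat.
- by rewrite mem_cat negb_or Hbe.
- rewrite map_cat. exact: gen_cat.
Qed.

Lemma lang_char w : lang G w <-> ((w = [::] /\ (start G, [::]) \in rules G) \/ Defs.pi G w [:: start G] [::]).
Proof.
split.
- move/derives_gen=> H; inversion H; subst.
  inversion H5; subst. rewrite cats0.
  case: (HG H2) => /= [[E]|[c [be [E Hbe]]]].
    subst g. inversion H3; subst. by left.
  simpl in E; subst g. inversion H3; subst. right.
  exists be; split=> //. rewrite cats0.
  apply: (@gen_pi (size w).+1) => //.
- case=> [[-> Hr]|H].
    apply: gen_derives. have := Gn Hr Gnil Gnil. by [].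
  apply: gen_derives. exact: (pi_gen H).
Qed.

End Aux.

Lemma one_dir (V Sigma : finType) (G : cfg V Sigma) :
  GNF G ->
  forall t u : seq Sigma, (forall a b, Defs.pi G t a b <-> Defs.pi G u a b) ->
  forall w z, lang G (w ++ t ++ z) -> lang G (w ++ u ++ z).
Proof.
move=> HG t u E w z /(lang_char HG) H; apply/(lang_char HG).
case: H => [[Hw Hr]|H].
  left; split=> //.
  have Ht : t = [::] by move: Hw; case: w => //; case: (t) => //.
  have : Defs.pi G t [::] [::] by rewrite Ht.
  move/E; case Hu: u => // _.
  by move: Hw; rewrite Ht; case: w => //; case: z.
right; move/pi_cat: H => [b [H1 /pi_cat [c [H2 H3]]]].
apply/pi_cat; exists b; split=> //; apply/pi_cat; exists c; split=> //.
by apply/E.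
Qed.

Theorem lemma3 (V Sigma : finType) (G : cfg V Sigma) :
  GNF G ->
  forall t u : seq Sigma, predisp G t = predisp G u -> synt_cong (lang G) t u.
Proof.
move=> HG t u E.
have E' : forall a b, Defs.pi G t a b <-> Defs.pi G u a b.
  move=> a b. have := f_equal (fun f => f (a, b)) E. rewrite /predisp /= => ->.
  by [].
move=> w z; split; first exact: one_dir.
apply: one_dir => // a b; by split=> /E'.
Qed.
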